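(* Let $n\ge1$ players all have the same valuation $v$ on a finite set of goods $M$. Then every leximin++ solution is EFX. That is, any allocation $A$ for which there is no allocation $B$ with $A\prec_{++}B$ is EFX. In particular, an EFX allocation always exists for identical general valuations.
   Context: A valuation is a function $v:2^M\to\mathbb{R}_{\ge0}$ with $v(\emptyset)=0$ that is monotone: $v(S)\le v(T)$ whenever $S\subseteq T$. An allocation is an ordered partition $(A_1,\dots,A_n)$ of $M$; parts may be empty. It is EFX if for all players $i,j$ and every $g\in A_j$ we have $v_i(A_i)\ge v_i(A_j\setminus\{g\})$. For an allocation $A$, let $X^A$ be the ordering of the players by increasing utility $v_i(A_i)$, with ties broken by increasing player index. The leximin++ comparison is defined as follows. For allocations $A$ and $B$, scan $\ell=1,\dots,n$, and let $i=X^A_\ell$ and $j=X^B_\ell$. - If $v_i(A_i)\ne v_j(B_j)$, stop: $A\prec_{++}B$ holds if and only if $v_i(A_i)<v_j(B_j)$. - Otherwise, if $|A_i|\ne|B_j|$, stop: $A\prec_{++}B$ holds if and only if $|A_i|<|B_j|$. - Otherwise continue to $\ell+1$. If the scan finishes without stopping, then $A\prec_{++}B$ is false. A leximin++ solution is an allocation $A$ that is maximal for this comparison: there is no allocation $B$ with $A\prec_{++}B$. *)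

(* Defs.v *)
From HB Require Import structures.
From mathcomp Require Import all_boot all_order all_algebra.
Set Implicit Arguments. Unset Strict Implicit. Unset Printing Implicit Defensive.
Import Order.TTheory GRing.Theory Num.Theory.
Local Open Scope ring_scope.

Section Defs.
Variables (R : realDomainType) (M : finType) (n : nat).

Definition is_valuation (v : {set M} -> R) : Prop :=
  [/\ v set0 = 0, (forall S : {set M}, 0 <= v S) & (forall S T : {set M}, S \subset T -> v S <= v T)].

Definition is_allocation (A : 'I_n -> {set M}) : Prop :=
  (forall i j : 'I_n, i != j -> [disjoint A i & A j]) /\
  (forall g : M, exists i : 'I_n, g \in A i).

Definition EFX (v : {set M} -> R) (A : 'I_n -> {set M}) : Prop :=
  forall (i j : 'I_n) (g : M), g \in A j -> v (A j :\ g) <= v (A i).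

Definition player_le (v : {set M} -> R) (A : 'I_n -> {set M}) : rel 'I_n :=
  fun i j => (v (A i) < v (A j)) || ((v (A i) == v (A j)) && (i <= j)%N).

Definition XA (v : {set M} -> R) (A : 'I_n -> {set M}) : seq 'I_n :=
  sort (player_le v A) (enum 'I_n).

Fixpoint lexpp_scan (s t : seq (R * nat)) : bool :=
  match s, t with
  | x :: s', y :: t' =>
      if x.1 != y.1 then x.1 < y.1
      else if x.2 != y.2 then (x.2 < y.2)%N
      else lexpp_scan s' t'
  | _, _ => false
  end.

Definition profile (v : {set M} -> R) (A : 'I_n -> {set M}) : seq (R * nat) :=
  [seq (v (A i), #|A i|) | i <- XA v A].

Definition lexpp_lt (v : {set M} -> R) (A B : 'I_n -> {set M}) : bool :=
  lexpp_scan (profile v A) (profile v B).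

Definition leximinpp (v : {set M} -> R) (A : 'I_n -> {set M}) : Prop :=
  is_allocation A /\ ~ (exists B, is_allocation B /\ lexpp_lt v A B).

End Defs.

(* Main.v *)
Require Import Defs.
From HB Require Import structures.
From mathcomp Require Import all_boot all_order all_algebra.
From Stdlib Require Import FunctionalExtensionality.
Import Order.TTheory GRing.Theory Num.Theory.
Local Open Scope ring_scope.

Lemma ex_min (R : realDomainType) (I : finType) (f : I -> R) (i0 : I) :
  exists p, forall q, (f p <= f q)%R.
Proof. case: (@arg_minP _ _ _ i0 xpredT f isT) => p _ H. by exists p => q; apply: H. Qed.

Lemma sort_split (T : eqType) (r : rel T) (L : pred T) s :
  total r -> transitive r -> antisymmetric r ->
  (forall x y, x \in s -> y \in s -> L x -> ~~ L y -> r x y) ->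
  sort r s = sort r (filter L s) ++ sort r (filter (predC L) s).
Proof.
move=> tot tr anti hL; apply: (sorted_eq tr anti).
- exact: sort_sorted.
- rewrite sorted_pairwise // pairwise_cat -!sorted_pairwise // !sort_sorted // !andbT.
  apply/allrelP => x y; rewrite !mem_sort !mem_filter => /andP[Lx xs] /andP[Ly ys].
  exact: hL.
- rewrite perm_sort -(perm_filterC L s); apply: perm_cat; by rewrite perm_sym perm_sort.
Qed.

Section S.
Variables (R : realDomainType) (M : finType) (n : nat) (v : {set M} -> R).

Lemma scan_cat (u s t : seq (R * nat)) (x y : R * nat) :
  (x.1 < y.1) || ((x.1 == y.1) && (x.2 < y.2)%N) ->
  lexpp_scan (u ++ x :: s) (u ++ y :: t).
Proof.
elim: u => [|z u IH] /=.
- case/orP => [h|/andP[/eqP e h]].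
  + by rewrite (lt_eqF h) /= h.
  + by rewrite e eqxx /= (ltn_eqF h) /= h.
- by move=> h; rewrite !eqxx /=; apply: IH.
Qed.

Lemma scan_irr (s : seq (R * nat)) : lexpp_scan s s = false.
Proof. by elim: s => //= x s IH; rewrite !eqxx. Qed.

Lemma scan_trans (s t u : seq (R * nat)) :
  lexpp_scan s t -> lexpp_scan t u -> lexpp_scan s u.
Proof.
elim: s t u => [|x s IH] [|y t] [|z u] //=.
case: (eqVneq x.1 y.1) => [e1|n1] /=.
- case: (eqVneq x.2 y.2) => [e2|n2] /=.
  + rewrite e1 e2; case: (y.1 != z.1) => //; case: (y.2 != z.2) => //; exact: IH.
  + move=> h; rewrite e1; case: (y.1 != z.1) => //.
    case: (eqVneq y.2 z.2) => [e3|n3] /=.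
    * by rewrite -e3 (ltn_eqF h).
    * move=> h2; have h3 := ltn_trans h h2; by rewrite (ltn_eqF h3).
- move=> h; case: (eqVneq y.1 z.1) => [e3|n3] /=.
  + by rewrite -e3 (lt_eqF h) h.
  + move=> h2; have h3 := lt_trans h h2; by rewrite (lt_eqF h3) h3.
Qed.

Lemma lexpp_trans (A B C : 'I_n -> {set M}) :
  lexpp_lt v A B -> lexpp_lt v B C -> lexpp_lt v A C.
Proof. exact: scan_trans. Qed.

Lemma lexpp_irr (A : 'I_n -> {set M}) : lexpp_lt v A A = false.
Proof. exact: scan_irr. Qed.

Lemma ple_total (A : 'I_n -> {set M}) : total (player_le v A).
Proof.
move=> i j; rewrite /player_le.
case: (ltgtP (v (A i)) (v (A j))) => //= e.
by rewrite leq_total.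
Qed.

Lemma ple_trans (A : 'I_n -> {set M}) : transitive (player_le v A).
Proof.
move=> j i k; rewrite /player_le => /orP[h1|/andP[/eqP e1 l1]] /orP[h2|/andP[/eqP e2 l2]].
- by rewrite (lt_trans h1 h2).
- by rewrite -e2 h1.
- by rewrite e1 h2.
- by rewrite e1 e2 eqxx (leq_trans l1 l2) orbT.
Qed.

Lemma ple_anti (A : 'I_n -> {set M}) : antisymmetric (player_le v A).
Proof.
move=> i j /andP[/orP[h1|/andP[/eqP e1 l1]] /orP[h2|/andP[/eqP e2 l2]]].
- by move: (lt_trans h1 h2); rewrite ltxx.
- by rewrite e2 ltxx in h1.
- by rewrite e1 ltxx in h2.
- by apply/val_inj/eqP; rewrite eqn_leq l1 l2.
Qed.

Lemma ple_of (A : 'I_n -> {set M}) x y : v (A x) <= v (A y) -> (v (A x) == v (A y) -> (x <= y)%N) ->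
  player_le v A x y.
Proof.
rewrite /player_le le_eqVlt => /orP[e|->] // h.
by rewrite e (h e) orbT.
Qed.

Lemma part1 (A : 'I_n -> {set M}) : is_valuation v -> leximinpp v A -> EFX v A.
Proof.
case=> v0 vpos vmon [[Adisj Acov] Amax] i j g gAj.
rewrite leNgt; apply/negP => viol.
have [p0 hmin] := @ex_min _ _ (fun p => v (A p)) i.
set a := v (A p0) in hmin.
have [k /eqP vk kmax] := @arg_maxnP _ p0 (fun p => v (A p) == a) (fun p => val p) (eqxx _).
have vj : a < v (A j).
  apply: (le_lt_trans (hmin i)); apply: (lt_le_trans viol); apply: vmon; exact: subD1set.
have vjg : a < v (A j :\ g) by apply: (le_lt_trans (hmin i)).
have hjk : j != k by apply/eqP => e; rewrite e vk ltxx in vj.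
have gnk : g \in A k = false := disjointFr (Adisj j k hjk) gAj.
pose B p := if p == k then g |: A k else if p == j then A j :\ g else A p.
have BA p : p != k -> p != j -> B p = A p by rewrite /B => /negbTE -> /negbTE ->.
have Bk : B k = g |: A k by rewrite /B eqxx.
have Bj : B j = A j :\ g by rewrite /B (negbTE hjk) eqxx.
have Bsub p x : x \in B p -> x != g -> x \in A p.
  rewrite /B; case: (eqVneq p k) => [->|_]; first by rewrite !inE => /orP[/eqP->|]; rewrite ?eqxx.
  by case: (eqVneq p j) => [->|_] //; rewrite !inE => /andP[].
have Bg p : g \in B p -> p = k.
  rewrite /B; case: (eqVneq p k) => [->|_] //.
  case: (eqVneq p j) => [->|pj]; first by rewrite !inE eqxx.
  by rewrite (disjointFl (Adisj p j pj) gAj).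
have alB : is_allocation B.
  split.
  - move=> p q pq; rewrite disjoint_subset; apply/subsetP => x xp; rewrite inE; apply/negP => xq.
    case: (eqVneq x g) => [e|xg].
    + rewrite e in xp xq; move: pq; by rewrite (Bg _ xp) (Bg _ xq) eqxx.
    + by move: (disjointFr (Adisj p q pq) (Bsub _ _ xp xg)); rewrite (Bsub _ _ xq xg).
  - move=> x; case: (eqVneq x g) => [->|xg]; first by exists k; rewrite Bk setU11.
    have [p xp] := Acov x; exists p.
    case: (eqVneq p k) => [e|pk]; first by rewrite e Bk setU1r // -e.
    case: (eqVneq p j) => [e|pj]; first by rewrite e Bj !inE xg -e xp.
    by rewrite BA.
apply: Amax; exists B; split => //.
pose Low := fun p : 'I_n => (v (A p) == a) && (val p < val k)%N.
pose e := enum 'I_n.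
have amin q : v (A q) != a -> a < v (A q) by move=> h; rewrite lt_neqAle eq_sym h hmin.
have vB q : a <= v (B q).
  case: (eqVneq q k) => [->|qk]; first by rewrite Bk -vk; apply: vmon; exact: subsetU1.
  case: (eqVneq q j) => [->|qj]; first by rewrite Bj ltW.
  by rewrite BA.
have Lowne q : Low q -> (q != k) && (q != j).
  rewrite /Low => /andP[/eqP vq qk]; apply/andP; split.
  - by apply/eqP => E; rewrite E ltnn in qk.
  - by apply/eqP => E; rewrite E in vq; rewrite vq ltxx in vj.
have hA : XA v A = sort (player_le v A) (filter Low e) ++ k ::
    sort (player_le v A) (filter (predC (pred1 k)) (filter (predC Low) e)).
  rewrite /XA (@sort_split _ _ Low (enum 'I_n) (ple_total A) (ple_trans A) (ple_anti A)); last first.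
    move=> x y _ _ /andP[/eqP vx xk] nLy.
    case: (eqVneq (v (A y)) a) => [vy|vy].
    + apply: ple_of; first by rewrite vx vy.
      move=> _; rewrite /Low /= vy eqxx /= -leqNgt in nLy.
      exact: ltnW (leq_trans xk nLy).
    + apply: ple_of; first by rewrite vx; exact: ltW (amin _ vy).
      by rewrite vx eq_sym (negbTE vy).
  congr (_ ++ _).
  rewrite (@sort_split _ _ (pred1 k) _ (ple_total A) (ple_trans A) (ple_anti A)); last first.
    move=> x y _; rewrite mem_filter /= => /andP[nLy _] /eqP -> yk.
    case: (eqVneq (v (A y)) a) => [vy|vy].
    + exfalso; move/eqP: yk; apply; apply/val_inj/eqP; rewrite eqn_leq.
      apply/andP; split; first exact: (kmax y (introT eqP vy)).
      by rewrite /Low /= vy eqxx /= -leqNgt in nLy.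
    + apply: ple_of; rewrite vk; first exact: ltW (amin _ vy).
      by rewrite eq_sym (negbTE vy).
  rewrite filter_pred1_uniq //.
  - by rewrite filter_uniq // enum_uniq.
  - by rewrite mem_filter /= /Low ltnn andbF mem_enum.
have hB : XA v B = sort (player_le v B) (filter Low e) ++
    sort (player_le v B) (filter (predC Low) e).
  rewrite /XA (@sort_split _ _ Low (enum 'I_n) (ple_total B) (ple_trans B) (ple_anti B)) //.
  move=> x y _ _ Lx nLy; have /andP[xk xj] := Lowne x Lx.
  move: Lx => /andP[/eqP vx xlk].
  case: (eqVneq y k) => [->|yk].
    by apply: ple_of; rewrite BA // vx ?vB // => _; exact: ltnW.
  case: (eqVneq y j) => [->|yj].
    by apply: ple_of; rewrite BA // vx Bj ?(ltW vjg) // (lt_eqF vjg).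
  case: (eqVneq (v (A y)) a) => [vy|vy].
  + apply: ple_of; first by rewrite !BA // vx vy.
    move=> _; rewrite /Low /= vy eqxx /= -leqNgt in nLy.
    exact: ltnW (leq_trans xlk nLy).
  + apply: ple_of; first by rewrite !BA // vx; exact: ltW (amin _ vy).
    by rewrite !BA // vx eq_sym (negbTE vy).
have hpre : sort (player_le v B) (filter Low e) = sort (player_le v A) (filter Low e).
  apply: (sorted_eq (ple_trans B) (ple_anti B)).
  - apply: sort_sorted; exact: ple_total.
  - rewrite (@eq_in_sorted _ [pred p | Low p] (player_le v B) (player_le v A)).
    + apply: sort_sorted; exact: ple_total.
    + move=> x y; rewrite !inE => Lx Ly.
      have /andP[xk xj] := Lowne x Lx; have /andP[yk yj] := Lowne y Ly.
      by rewrite /player_le !BA.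
    + apply/allP => x; rewrite mem_sort mem_filter => /andP[Lx _]; by rewrite inE.
  - by rewrite perm_sort perm_sym perm_sort.
rewrite /lexpp_lt /profile hA hB hpre !map_cat.
have -> : [seq (v (B i0), #|B i0|) | i0 <- sort (player_le v A) (filter Low e)] =
          [seq (v (A i0), #|A i0|) | i0 <- sort (player_le v A) (filter Low e)].
  apply/eq_in_map => x; rewrite mem_sort mem_filter => /andP[Lx _].
  by have /andP[xk xj] := Lowne x Lx; rewrite BA.
have kw : k \in sort (player_le v B) (filter (predC Low) e).
  by rewrite mem_sort mem_filter /= /Low ltnn andbF mem_enum.
case E: (sort (player_le v B) (filter (predC Low) e)) kw => [|h w] // _.
have : h \in sort (player_le v B) (filter (predC Low) e) by rewrite E mem_head.
rewrite mem_sort mem_filter /= => /andP[nLh _].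
apply: scan_cat => /=; rewrite vk.
case: (eqVneq h k) => [->|hk].
  move: (vB k); rewrite le_eqVlt => /orP[/eqP E1|lt]; last by rewrite lt.
  by rewrite -E1 ltxx eqxx /= Bk cardsU1 gnk add1n ltnSn.
case: (eqVneq h j) => [->|hj]; first by rewrite Bj vjg.
rewrite BA //.
case: (eqVneq (v (A h)) a) => [vh|vh]; last by rewrite amin.
exfalso; move/eqP: hk; apply; apply/val_inj/eqP; rewrite eqn_leq.
apply/andP; split; first exact: (kmax h (introT eqP vh)).
by rewrite /Low /= vh eqxx /= -leqNgt in nLh.
Qed.
Definition allocb (A : 'I_n -> {set M}) : bool :=
  [forall i, forall j, (i != j) ==> [disjoint A i & A j]] &&
  [forall g, [exists i, g \in A i]].

Lemma allocP (A : 'I_n -> {set M}) : reflect (is_allocation A) (allocb A).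
Proof.
apply: (iffP andP) => [[/forallP h1 /forallP h2]|[h1 h2]]; split.
- by move=> i j ij; move/forallP: (h1 i) => /(_ j); rewrite ij.
- by move=> g; have /existsP [i gi] := h2 g; exists i.
- by apply/forallP => i; apply/forallP => j; apply/implyP; apply: h1.
- by apply/forallP => g; have [i gi] := h2 g; apply/existsP; exists i.
Qed.

Lemma exists_leximin : (0 < n)%N -> exists A : 'I_n -> {set M}, leximinpp v A.
Proof.
move=> hn; pose i0 : 'I_n := Ordinal hn.
pose F0 : {ffun 'I_n -> {set M}} := [ffun p => if p == i0 then setT else set0].
have aF0 : allocb F0.
  apply/allocP; split.
  - move=> p q pq; rewrite !ffunE disjoint_subset; apply/subsetP => x.
    case: (eqVneq p i0) => [ep|_]; last by rewrite inE.
    case: (eqVneq q i0) => [eq|_]; last by rewrite !inE.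
    by move: pq; rewrite ep eq eqxx.
  - by move=> g; exists i0; rewrite ffunE eqxx inE.
pose up (F : {ffun 'I_n -> {set M}}) :=
  [set G : {ffun 'I_n -> {set M}} | allocb G && lexpp_lt v F G].
case: (@arg_minnP _ F0 allocb (fun F => #|up F|) aF0) => Fm aFm minF.
exists Fm; split; first exact/allocP.
case=> B [alB lt].
pose G : {ffun 'I_n -> {set M}} := [ffun p => B p].
have eG : (G : 'I_n -> {set M}) = B by apply: functional_extensionality => p; rewrite ffunE.
have aG : allocb G by apply/allocP; rewrite eG.
have ltG : lexpp_lt v Fm G by rewrite eG.
have : (#|up G| < #|up Fm|)%N.
  apply: proper_card; apply/properP; split.
  - apply/subsetP => H; rewrite !inE => /andP[aH lH]; rewrite aH /=.
    exact: lexpp_trans ltG lH.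
  - by exists G; rewrite !inE ?aG ?ltG ?lexpp_irr ?andbF.
by rewrite ltnNge minF.
Qed.
End S.

Theorem theorem4p2 (R : realDomainType) (M : finType) (n : nat)
  (v : {set M} -> R) :
  (1 <= n)%N -> is_valuation v ->
  (forall A : 'I_n -> {set M}, leximinpp v A -> EFX v A) /\
  (exists A : 'I_n -> {set M}, is_allocation A /\ EFX v A).
Proof.
move=> hn hv; split; first by move=> A; exact: (@part1 R M n v A hv).
have [A hA] := @exists_leximin R M n v hn.
by exists A; split; [exact: hA.1 | exact: (@part1 R M n v A hv)].
Qed.
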